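(* Let $\alpha\in(1,\infty)$, let $p_X$ be a distribution on a finite set $\mathcal X$ and $p_{Y\mid X}$ a channel to a finite set $\mathcal Y$, and define for channels $\tilde q_{Y\mid X}$ and reverse channels $r_{X\mid Y}$ $$\tilde F_\alpha^{\mathrm C}(\tilde q_{Y\mid X},r_{X\mid Y}):=\frac{\alpha}{1-\alpha}D(p_X\tilde q_{Y\mid X}\|p_Xp_{Y\mid X})+\mathbb E^{p_X\tilde q_{Y\mid X}}\!\left[\log\frac{r_{X\mid Y}(X\mid Y)}{p_X(X)}\right].$$ Then: (1) for fixed $\tilde q_{Y\mid X}$, $r_{X\mid Y}\mapsto\tilde F_\alpha^{\mathrm C}(\tilde q_{Y\mid X},r_{X\mid Y})$ is maximized by $r^*_{X\mid Y}(x\mid y)=\frac{p_X(x)\tilde q_{Y\mid X}(y\mid x)}{\sum_{x'}p_X(x')\tilde q_{Y\mid X}(y\mid x')}$; (2) for fixed $r_{X\mid Y}$, $\tilde q_{Y\mid X}\mapsto\tilde F_\alpha^{\mathrm C}(\tilde q_{Y\mid X},r_{X\mid Y})$ is maximized by $\tilde q^*_{Y\mid X}(y\mid x)=\frac{p_{Y\mid X}(y\mid x)r_{X\mid Y}(x\mid y)^{1-1/\alpha}}{\sum_{y'}p_{Y\mid X}(y'\mid x)r_{X\mid Y}(x\mid y')^{1-1/\alpha}}$.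
   Context: $\log$ is natural; $D$ is the Kullback–Leibler divergence. A channel $\tilde q_{Y\mid X}$ is a family $\{\tilde q_{Y\mid X}(\cdot\mid x)\}_{x\in\mathcal X}$ of distributions on $\mathcal Y$; a reverse channel $r_{X\mid Y}$ is a family $\{r_{X\mid Y}(\cdot\mid y)\}_{y\in\mathcal Y}$ of distributions on $\mathcal X$. $p_X\tilde q_{Y\mid X}$ denotes the joint distribution $p_X(x)\tilde q_{Y\mid X}(y\mid x)$. *)

(* Defs.v *)
From HB Require Import structures.
From mathcomp Require Import all_boot all_order all_algebra.
From mathcomp Require Import boolp reals ereal exp.
Set Implicit Arguments. Unset Strict Implicit. Unset Printing Implicit Defensive.
Import Order.TTheory GRing.Theory Num.Theory.
Local Open Scope ring_scope.

Section Defs.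
Variable R : realType.

Definition is_dist (T : finType) (p : T -> R) : Prop :=
  (forall t, 0 <= p t) /\ \sum_(t : T) p t = 1.

Definition is_channel (X Y : finType) (q : X -> Y -> R) : Prop :=
  forall x, is_dist (q x).

(* reverse channel r : Y -> X -> R, r y x = r_{X|Y}(x|y) *)
Definition is_rev_channel (X Y : finType) (r : Y -> X -> R) : Prop :=
  forall y, is_dist (r y).

(* KL divergence (natural log), with 0 log 0 = 0 and D = +oo when P is not
   absolutely continuous w.r.t. Q *)
Definition KL (T : finType) (P Q : T -> R) : \bar R :=
  if `[< exists t, 0 < P t /\ Q t = 0 >] then +oo%E
  else (\sum_(t : T | 0 < P t) P t * ln (P t / Q t))%:E.

(* E^{P}[ f ] for a log-type integrand given as f = ln g : terms with P = 0 are
   omitted; it is -oo if g vanishes somewhere on the support of P. *)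
Definition Elog (T : finType) (P g : T -> R) : \bar R :=
  if `[< exists t, 0 < P t /\ g t = 0 >] then -oo%E
  else (\sum_(t : T | 0 < P t) P t * ln (g t))%:E.

Definition FC (X Y : finType) (alpha : R) (pX : X -> R) (pYX : X -> Y -> R)
  (q : X -> Y -> R) (r : Y -> X -> R) : \bar R :=
  let joint := fun xy : X * Y => pX xy.1 * q xy.1 xy.2 in
  let ref := fun xy : X * Y => pX xy.1 * pYX xy.1 xy.2 in
  let ratio := fun xy : X * Y => r xy.2 xy.1 / pX xy.1 in
  ((alpha / (1 - alpha))%:E * KL joint ref + Elog joint ratio)%E.

End Defs.

(* Main.v *)
Require Import Defs.
From HB Require Import structures.
From mathcomp Require Import all_boot all_order all_algebra.
From mathcomp Require Import boolp reals ereal exp.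
From mathcomp Require Import ring lra.
Import Order.TTheory GRing.Theory Num.Theory.
Set Implicit Arguments. Unset Strict Implicit.
Local Open Scope ring_scope.

Section Aux.
Variable R : realType.

Lemma lnM' (x y : R) : 0 < x -> 0 < y -> ln (x * y) = ln x + ln y.
Proof. by move=> hx hy; rewrite lnM ?posrE. Qed.

Lemma lnD' (x y : R) : 0 < x -> 0 < y -> ln (x / y) = ln x - ln y.
Proof. by move=> hx hy; rewrite ln_div ?posrE. Qed.

Lemma ln_le_sub1 (z : R) : 0 < z -> ln z <= z - 1.
Proof.
move=> hz; have := @le_ln1Dx R (z - 1); rewrite (addrC 1) subrK; apply.
by rewrite ltrBrDl; lra.
Qed.

Lemma xlnle (x y : R) : 0 < x -> 0 < y -> x * ln (y / x) <= y - x.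
Proof.
move=> hx hy; have h := @ln_le_sub1 _ (divr_gt0 hy hx).
have := ler_wpM2l (ltW hx) h.
by rewrite mulrBr mulr1 mulrCA divff ?mulr1 // gt_eqF.
Qed.

Lemma eqle (x y : R) : x = y -> x <= y.
Proof. by move=> ->. Qed.

Lemma mul_pos (a b : R) : 0 <= a -> 0 <= b -> 0 < a * b -> 0 < a /\ 0 < b.
Proof.
move=> ha hb hab; split; rewrite lt_neqAle ?ha ?hb andbT; apply/eqP=> h;
  move: hab; rewrite -h ?mul0r ?mulr0 ltxx //.
Qed.

Lemma negoo (c : R) : c < 0 -> (c%:E * +oo = -oo)%E.
Proof. by move=> hc; rewrite mulry ltr0_sg // mulN1e. Qed.

Lemma sum_pair (X Y : finType) (G : X * Y -> R) :
  \sum_(t : X * Y) G t = \sum_(x : X) \sum_(y : Y) G (x, y).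
Proof. by rewrite pair_bigA; apply: eq_bigr => -[]. Qed.

Lemma sum_pos_all (T : finType) (P : pred T) (F : T -> R) :
  (forall t, 0 <= F t) -> \sum_(t | P t) F t <= \sum_t F t.
Proof.
move=> hF; rewrite [X in _ <= X](bigID P) /= lerDl; exact: sumr_ge0.
Qed.

Lemma sum_zero_out (T : finType) (F : T -> R) :
  (forall t, 0 <= F t) -> \sum_(t | 0 < F t) F t = \sum_t F t.
Proof.
move=> hF; rewrite [RHS](bigID (fun t => 0 < F t)) /= [X in _ = _ + X]big1 ?addr0 //.
by move=> t; rewrite lt_neqAle hF andbT negbK => /eqP <-.
Qed.

Lemma sum_zero_out2 (T : finType) (F G : T -> R) :
  (forall t, 0 <= F t) -> \sum_(t | 0 < F t) F t * G t = \sum_t F t * G t.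
Proof.
move=> hF; rewrite [RHS](bigID (fun t => 0 < F t)) /= [X in _ = _ + X]big1 ?addr0 //.
by move=> t; rewrite lt_neqAle hF andbT negbK => /eqP <-; rewrite mul0r.
Qed.

Lemma chan_sum (X Y : finType) (pX : X -> R) (q : X -> Y -> R) (h : X -> R) :
  is_channel q ->
  \sum_(t : X * Y) pX t.1 * q t.1 t.2 * h t.1 = \sum_x pX x * h x.
Proof.
move=> Hq; rewrite sum_pair; apply: eq_bigr => x _ /=.
rewrite -big_distrl -big_distrr /= (proj2 (Hq x)) mulr1 //.
Qed.

End Aux.
Theorem proposition3 (R : realType) (X Y : finType) (alpha : R)
  (pX : X -> R) (pYX : X -> Y -> R) :
  1 < alpha -> is_dist pX -> is_channel pYX ->
  (* (1) optimal reverse channel for fixed q *)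
  (forall (q : X -> Y -> R) (rstar : Y -> X -> R),
     is_channel q -> is_rev_channel rstar ->
     (forall y x, \sum_(x' : X) pX x' * q x' y != 0 ->
        rstar y x = pX x * q x y / \sum_(x' : X) pX x' * q x' y) ->
     forall r : Y -> X -> R, is_rev_channel r ->
       (FC alpha pX pYX q r <= FC alpha pX pYX q rstar)%E) /\
  (* (2) optimal channel for fixed r *)
  (forall (r : Y -> X -> R) (qstar : X -> Y -> R),
     is_rev_channel r -> is_channel qstar ->
     (forall x y, \sum_(y' : Y) pYX x y' * powR (r y' x) (1 - alpha^-1) != 0 ->
        qstar x y = pYX x y * powR (r y x) (1 - alpha^-1)
                    / \sum_(y' : Y) pYX x y' * powR (r y' x) (1 - alpha^-1)) ->
     forall q : X -> Y -> R, is_channel q ->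
       (FC alpha pX pYX q r <= FC alpha pX pYX qstar r)%E).
Proof.
move=> ha HpX HpYX.
have a0 : alpha != 0 by rewrite gt_eqF // (lt_trans ltr01).
have a1 : 1 - alpha != 0 by rewrite subr_eq0 lt_eqF.
have hc : alpha / (1 - alpha) < 0.
  by rewrite pmulr_rlt0 ?(lt_trans ltr01) // invr_lt0 subr_lt0.
split.
- move=> q rs Hq Hrs Hrsd r Hr; rewrite /FC /KL /Elog /=.
  case: asboolP => HK; first by rewrite negoo //= !addNye.
  case: asboolP => HL; first by rewrite addeNy leNye.
  set s := fun y => \sum_(x' : X) pX x' * q x' y.
  have pos : forall x y, 0 < pX x * q x y -> [/\ 0 < pX x, 0 < q x y, 0 < s y &
      rs y x = pX x * q x y / s y].
    move=> x y hj; have [h1 h2] := mul_pos (proj1 HpX x) (proj1 (Hq x) y) hj.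
    have hs : pX x * q x y <= s y.
      rewrite /s (bigD1 x) //= lerDl; apply: sumr_ge0 => i _.
      exact: mulr_ge0 (proj1 HpX i) (proj1 (Hq i) y).
    have hs' : 0 < s y by exact: lt_le_trans hs.
    by split => //; apply: Hrsd; rewrite gt_eqF.
  case: asboolP => HR.
    exfalso; case: HR => -[x y] /= [hj]; have [h1 h2 h3 ->] := pos x y hj.
    by apply/eqP; rewrite !mulf_neq0 ?invr_eq0 ?gt_eqF.
  rewrite -!EFinM -!EFinD lee_fin lerD2l.
  have sumj : \sum_(t : X * Y) pX t.1 * q t.1 t.2 = 1.
    rewrite sum_pair -(proj2 HpX); apply: eq_bigr => x _ /=.
    by rewrite -big_distrr /= (proj2 (Hq x)) mulr1.
  have sums : \sum_(y : Y) s y = 1.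
    by rewrite /s exchange_big -sumj sum_pair.
  rewrite -subr_le0 -sumrB.
  apply: (@le_trans _ _ (\sum_(t | 0 < pX t.1 * q t.1 t.2)
            (s t.2 * r t.2 t.1 - pX t.1 * q t.1 t.2))).
    apply: ler_sum => -[x y] /= hj; have [h1 h2 h3 e] := pos x y hj.
    have hr : 0 < r y x.
      rewrite lt_neqAle (proj1 (Hr y) x) andbT eq_sym; apply/eqP => r0.
      by apply: HL; exists (x, y); rewrite /= r0 mul0r.
    rewrite e.
    rewrite [X in X <= _](_ : _ = pX x * q x y * ln (s y * r y x / (pX x * q x y))).
      exact: (xlnle hj (mulr_gt0 h3 hr)).
    have hjs : 0 < pX x * q x y / s y by rewrite divr_gt0.
    rewrite !lnD' ?lnM' ?divr_gt0 ?mulr_gt0 //; ring.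
  rewrite sumrB subr_le0 (@sum_zero_out _ _ (fun t => pX t.1 * q t.1 t.2)); last first.
    by move=> t; apply: mulr_ge0 (proj1 HpX _) (proj1 (Hq _) _).
  rewrite sumj; apply: le_trans (sum_pos_all _ _) _.
    by move=> t; apply: mulr_ge0; [apply: sumr_ge0 => i _; apply: mulr_ge0 (proj1 HpX _) (proj1 (Hq _) _)| exact: (proj1 (Hr _) _)].
  rewrite sum_pair exchange_big /= -sums le_eqVlt; apply/orP; left; apply/eqP; apply: eq_bigr => y _.
  by rewrite -big_distrr /= (proj2 (Hr y)) mulr1.
- move=> r qs Hr Hqs Hqsd q Hq; rewrite /FC /KL /Elog /=.
  set c := alpha / (1 - alpha).
  set a := 1 - alpha^-1.
  have apos : 0 < a by rewrite subr_gt0 invf_lt1 // (lt_trans ltr01).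
  pose Z := fun x => \sum_(y' : Y) pYX x y' * powR (r y' x) a.
  case: asboolP => HK; first by rewrite negoo //= addNye leNye.
  case: asboolP => HL; first by rewrite addeNy leNye.
  have pos : forall x y, 0 < pX x * q x y ->
      [/\ 0 < pX x, 0 < q x y, 0 < pYX x y & 0 < r y x].
    move=> x y hj; have [h1 h2] := mul_pos (proj1 HpX x) (proj1 (Hq x) y) hj.
    have hp : 0 < pYX x y.
      rewrite lt_neqAle (proj1 (HpYX x) y) andbT eq_sym; apply/eqP => p0.
      by apply: HK; exists (x, y); rewrite /= p0 mulr0.
    have hr : 0 < r y x.
      rewrite lt_neqAle (proj1 (Hr y) x) andbT eq_sym; apply/eqP => r0.
      by apply: HL; exists (x, y); rewrite /= r0 mul0r.
    by [].
  have Zpos : forall x, 0 < pX x -> 0 < Z x.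
    move=> x hx; case: (pselect (exists y, 0 < q x y)) => [[y hy]|hn].
      have [_ _ hp hr] := pos x y (mulr_gt0 hx hy).
      have hs : pYX x y * powR (r y x) a <= Z x.
        rewrite /Z (bigD1 y) //= lerDl; apply: sumr_ge0 => i _.
        by apply: mulr_ge0 (proj1 (HpYX x) i) (powR_ge0 _ _).
      by apply: lt_le_trans hs; rewrite mulr_gt0 ?powR_gt0.
    exfalso; have := proj2 (Hq x); rewrite big1 => [/eqP|y _]; first by rewrite eq_sym oner_eq0.
    apply/eqP; rewrite eq_le (proj1 (Hq x) y) andbT leNgt; apply/negP => hy.
    by apply: hn; exists y.
  have qsd : forall x y, 0 < pX x -> qs x y = pYX x y * powR (r y x) a / Z x.
    by move=> x y hx; apply: Hqsd; rewrite gt_eqF // Zpos.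
  have lnqs : forall x y, 0 < pX x -> 0 < pYX x y -> 0 < r y x ->
      ln (qs x y) = ln (pYX x y) + a * ln (r y x) - ln (Z x).
    move=> x y hx hp hr; rewrite qsd // lnD' ?lnM' ?ln_powR ?mulr_gt0 ?powR_gt0 ?Zpos //.
  have pos2 : forall x y, 0 < pX x * qs x y ->
      [/\ 0 < pX x, 0 < pYX x y, 0 < r y x & 0 < qs x y].
    move=> x y hj; have [h1 h2] := mul_pos (proj1 HpX x) (proj1 (Hqs x) y) hj.
    move: (h2); rewrite qsd // pmulr_lgt0 ?invr_gt0 ?Zpos // => h3.
    have [h4 h5] := mul_pos (proj1 (HpYX x) y) (powR_ge0 _ _) h3.
    by split => //; apply: gt0_powR h5 => //; exact: (proj1 (Hr y) x).
  case: asboolP => HR.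
    exfalso; case: HR => -[x y] /= [hj]; have [h1 h2 h3 h4] := pos2 x y hj.
    by apply/eqP; rewrite mulf_neq0 ?gt_eqF.
  case: asboolP => HR2.
    exfalso; case: HR2 => -[x y] /= [hj]; have [h1 h2 h3 h4] := pos2 x y hj.
    by apply/eqP; rewrite mulf_neq0 ?invr_eq0 ?gt_eqF.
  rewrite -!EFinM -!EFinD lee_fin.
  pose g := fun x => - c * ln (Z x) - ln (pX x).
  have hnn : forall (qq : X -> Y -> R), is_channel qq ->
      forall t : X * Y, 0 <= pX t.1 * qq t.1 t.2.
    by move=> qq Hqq t; apply: mulr_ge0 (proj1 HpX _) (proj1 (Hqq _) _).
  have RHSe : c * \sum_(t | 0 < pX t.1 * qs t.1 t.2)
       pX t.1 * qs t.1 t.2 * ln (pX t.1 * qs t.1 t.2 / (pX t.1 * pYX t.1 t.2)) +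
    \sum_(t | 0 < pX t.1 * qs t.1 t.2)
       pX t.1 * qs t.1 t.2 * ln (r t.2 t.1 / pX t.1) = \sum_x pX x * g x.
    rewrite -(chan_sum pX g Hqs) -(@sum_zero_out2 _ _ (fun t => pX t.1 * qs t.1 t.2) (fun t => g t.1)); last exact: hnn.
    rewrite mulr_sumr -big_split /=; apply: eq_bigr => -[x y] /= hj.
    have [h1 h2 h3 h4] := pos2 x y hj.
    rewrite !lnD' ?lnM' ?mulr_gt0 ?divr_gt0 // lnqs // /g /c /a.
    by field; rewrite a1 a0.
  rewrite RHSe mulr_sumr -big_split /=.
  have hc' : 0 < - c by rewrite oppr_gt0.
  apply: (@le_trans _ _ (\sum_(t | 0 < pX t.1 * q t.1 t.2) ((- c) * (pX t.1 * qs t.1 t.2)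
      - (- c) * (pX t.1 * q t.1 t.2) + pX t.1 * q t.1 t.2 * g t.1))).
    apply: ler_sum => -[x y] /= hj; have [h1 h2 h3 h4] := pos x y hj.
    have hqs : 0 < qs x y by rewrite qsd // !mulr_gt0 ?powR_gt0 ?invr_gt0 ?Zpos.
    have key := xlnle h2 hqs.
    have hm : 0 <= pX x * - c by rewrite mulr_ge0 ?ltW.
    have := ler_wpM2l hm key.
    rewrite !lnD' ?lnM' ?mulr_gt0 // lnqs // => H.
    apply: (le_trans _ (le_trans (lerD H (lexx (pX x * q x y * g x))) _));
      apply: eqle; rewrite /g /c /a; first by field; rewrite a1 a0.
    by ring.
  have sumj : forall qq : X -> Y -> R, is_channel qq ->
      \sum_(t : X * Y) pX t.1 * qq t.1 t.2 = 1.
    move=> qq Hqq; rewrite sum_pair -(proj2 HpX); apply: eq_bigr => x _ /=.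
    by rewrite -big_distrr /= (proj2 (Hqq x)) mulr1.
  rewrite big_split sumrB /= -!mulr_sumr.
  rewrite (@sum_zero_out _ _ (fun t => pX t.1 * q t.1 t.2)); last exact: hnn.
  rewrite (@sum_zero_out2 _ _ (fun t => pX t.1 * q t.1 t.2) (fun t => g t.1)); last exact: hnn.
  rewrite chan_sum // sumj //.
  have hA : \sum_(t | 0 < pX t.1 * q t.1 t.2) pX t.1 * qs t.1 t.2 <= 1.
    by rewrite -(sumj qs Hqs); apply: sum_pos_all; exact: hnn.
  have : - c * (\sum_(t | 0 < pX t.1 * q t.1 t.2) pX t.1 * qs t.1 t.2 - 1) <= 0.
    by rewrite pmulr_rle0 // subr_le0.
  rewrite mulrBr; lra.
Qed.
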